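(* Let $G_n$ be a connected graph with $n$ nodes whose degrees satisfy $\max_i d_i/\min_i d_i\le C$ for some constant $C$. Then for every $\epsilon\in(0,1)$, $$t_{\mathrm{cov}}(1-\epsilon)\;\ge\;\frac{n}{2C}\log\big((1-\epsilon)n\big).$$
   Context: The averaging process on a finite, undirected, connected graph $G=(V,E)$, $V=\{1,\dots,n\}$: the state vector $v(t)\in\mathbb R^n$, $t=0,1,2,\dots$, starts from a given $v(0)$; at each step $t\ge 1$ an edge $\{i,j\}\in E$ is chosen uniformly at random (independently of all previous choices) and both $v_i$ and $v_j$ are replaced by $(v_i+v_j)/2$, all other coordinates unchanged. $d_i$ is the degree of vertex $i$. For $w\in\mathbb R^n$ let $n(w)=\#\{i:w_i\neq0\}$. For $\alpha\in(0,1]$ and a vertex $i$, $t_{\mathrm{cov}}(\alpha,i)$ is the expectation of the first time $t$ at which $n(v(t))\ge\alpha n$ for the process started at $v(0)=e_i$, and $t_{\mathrm{cov}}(\alpha)=\max_i t_{\mathrm{cov}}(\alpha,i)$. Logarithms are natural. *)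

(* Defs.v *)
From HB Require Import structures.
From mathcomp Require Import all_boot all_order all_algebra.
From mathcomp Require Import all_classical all_reals all_analysis.
Set Implicit Arguments. Unset Strict Implicit. Unset Printing Implicit Defensive.
Import Order.TTheory GRing.Theory Num.Theory.
Local Open Scope ring_scope.

Section Averaging.
Variables (R : realType) (n : nat) (adj : rel 'I_n).

Definition deg (i : 'I_n) : nat := #|[set j | adj i j]|.

(* an undirected edge {i,j} is represented by the ordered pair (i,j), i < j *)
Definition edges : {set 'I_n * 'I_n} :=
  [set p : 'I_n * 'I_n | ((p.1 : nat) < p.2)%N && adj p.1 p.2].

Definition avg_step (v : 'I_n -> R) (p : 'I_n * 'I_n) : 'I_n -> R :=
  fun k => if (k == p.1) || (k == p.2) then (v p.1 + v p.2) / 2 else v k.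

Definition run (v0 : 'I_n -> R) (s : seq ('I_n * 'I_n)) : 'I_n -> R :=
  foldl avg_step v0 s.

Definition nsupp (w : 'I_n -> R) : nat := #|[set i | w i != 0]|.

Definition covered (alpha : R) (w : 'I_n -> R) : bool :=
  alpha * n%:R <= (nsupp w)%:R.

(* the first time t at which n(v(t)) >= alpha n equals size s *)
Definition first_hit (alpha : R) (v0 : 'I_n -> R) (s : seq ('I_n * 'I_n)) : bool :=
  covered alpha (run v0 s) &&
  [forall u : 'I_(size s), ~~ covered alpha (run v0 (take u s))].

(* P(T = t): edges chosen i.i.d. uniformly from the edge set *)
Definition prob_hit_at (alpha : R) (v0 : 'I_n -> R) (t : nat) : R :=
  (#|[set s : t.-tuple ('I_n * 'I_n) |
        all (fun p => p \in edges) s && first_hit alpha v0 s]|)%:R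
  / (#|edges|%:R ^+ t).

Definition exp_hit (alpha : R) (v0 : 'I_n -> R) : \bar R :=
  (\sum_(t <oo) ((t%:R * prob_hit_at alpha v0 t)%:E))%E.

Definition unit_vec (i : 'I_n) : 'I_n -> R := fun k => if k == i then 1 else 0.

Definition tcov_at (alpha : R) (i : 'I_n) : \bar R := exp_hit alpha (unit_vec i).

Definition tcov (alpha : R) : \bar R :=
  (\big[Order.max/-oo]_(i : 'I_n) tcov_at alpha i)%E.

End Averaging.

(* Main.v *)
Require Import Defs.
From HB Require Import structures.
From mathcomp Require Import all_boot all_order all_algebra.
From mathcomp Require Import all_classical all_reals all_analysis.
From mathcomp Require Import ring lra.
Import Order.TTheory GRing.Theory Num.Theory.
Local Open Scope ring_scope.
Set Implicit Arguments. Unset Strict Implicit. Unset Printing Implicit Defensive.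

Section Bridge.
Variables (R : realType) (n : nat) (adj : rel 'I_n) (alpha : R).
Local Notation T := ('I_n * 'I_n)%type.
Local Notation Ed := (edges adj).

Lemma forall_ordE k (Q : nat -> bool) :
  [forall u : 'I_k, Q u] = all Q (iota 0 k).
Proof.
apply/idP/idP.
  move/forallP => H; apply/allP => x.
  by rewrite mem_iota add0n => /andP[_ xk]; exact: (H (Ordinal xk)).
move/allP => H; apply/forallP => u; apply: H; by rewrite mem_iota add0n ltn_ord.
Qed.

Lemma first_hit_cons (v : 'I_n -> R) e s :
  first_hit alpha v (e :: s) = ~~ covered alpha v && first_hit alpha (avg_step v e) s.
Proof.
rewrite /first_hit.
rewrite (forall_ordE _ (fun u => ~~ covered alpha (run v (take u (e :: s))))).
rewrite (forall_ordE _ (fun u => ~~ covered alpha (run (avg_step v e) (take u s)))).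
rewrite /= -(addn0 1%N) iotaDl all_map.
rewrite andbCA; congr (_ && (_ && _)); exact: eq_all.
Qed.

Definition cnt (t : nat) (v : 'I_n -> R) : nat :=
  \sum_(s : t.-tuple T) (all (fun p => p \in Ed) s && first_hit alpha v s).

Lemma card_cnt t v :
  #|[set s : t.-tuple T | all (fun p => p \in Ed) s && first_hit alpha v s]| = cnt t v.
Proof.
by rewrite -sum1_card /cnt big_mkcond /=; apply: eq_bigr => s _; rewrite inE; case: ifP.
Qed.

Lemma cnt0 v : cnt 0 v = covered alpha v.
Proof.
rewrite /cnt (big_pred1 [tuple]) /=; last by move=> s; apply/esym/eqP/val_inj; case: s => [[]].
rewrite /first_hit /=.
have -> : [forall u : 'I_0, ~~ covered alpha v] = true by apply/forallP => -[].
by rewrite andbT.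
Qed.

Lemma cntS t v : cnt t.+1 v =
  if covered alpha v then 0%N else \sum_(e in Ed) cnt t (avg_step v e).
Proof.
rewrite /cnt (reindex (fun p : T * t.-tuple T => [tuple of p.1 :: p.2])) /=; last first.
  exists (fun s : t.+1.-tuple T => (thead s, [tuple of behead s])) => [[x s] _|s _] /=.
    by congr (_, _); apply: val_inj.
  by rewrite -tuple_eta.
rewrite -(pair_bigA _ (fun x (s : t.-tuple T) => nat_of_bool (all (fun p => p \in Ed) (x :: s) && first_hit alpha v (x :: s)))) /=.
case: ifP => cv.
  by apply: big1 => x _; apply: big1 => s _; rewrite first_hit_cons cv /= andbF.
rewrite [RHS]big_mkcond /=; apply: eq_bigr => x _.
case: ifP => xE; last by apply: big1 => s _.
by apply: eq_bigr => s _; rewrite first_hit_cons cv /=.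
Qed.

End Bridge.

Definition sstep n (S : {set 'I_n}) (e : 'I_n * 'I_n) : {set 'I_n} :=
  if (e.1 \in S) || (e.2 \in S) then e.1 |: (e.2 |: S) else S.

Section Sets.
Variable n : nat.
Implicit Types (S : {set 'I_n}) (e : 'I_n * 'I_n).

Lemma sstep_nb S e : ~~ ((e.1 \in S) != (e.2 \in S)) -> sstep S e = S.
Proof.
rewrite /sstep; case E1: (e.1 \in S); case E2: (e.2 \in S) => //= _.
apply/setP => k; rewrite !inE; case: (k =P e.1) => [->|_]; rewrite ?E1 ?orbT //.
by case: (k =P e.2) => [->|_]; rewrite ?E2 ?orbT.
Qed.

Lemma sstep_b S e : (e.1 \in S) != (e.2 \in S) -> #|sstep S e| = #|S|.+1.
Proof.
rewrite /sstep; case E1: (e.1 \in S); case E2: (e.2 \in S) => //= _.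
  by rewrite cardsU1 setU1r // cardsU1 E2.
have ne : e.1 != e.2 by apply/eqP => h; move: E1; rewrite h E2.
by rewrite cardsU1 !inE negb_or ne E1 cardsU1 E2.
Qed.

Lemma sstep_ne S e : (0 < #|S|)%N -> (0 < #|sstep S e|)%N.
Proof.
case b: ((e.1 \in S) != (e.2 \in S)); first by rewrite sstep_b.
by rewrite sstep_nb ?b.
Qed.
End Sets.

Section Supp.
Variables (R : realType) (n : nat).
Definition supp (v : 'I_n -> R) : {set 'I_n} := [set i | v i != 0].
Definition nonneg (v : 'I_n -> R) := forall i, 0 <= v i.

Lemma avg_ne0 (a b : R) : 0 <= a -> 0 <= b -> ((a + b) / 2 != 0) = (a != 0) || (b != 0).
Proof.
move=> a0 b0; rewrite mulf_eq0 invr_eq0 pnatr_eq0 orbF paddr_eq0 //.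
by rewrite negb_and.
Qed.

Lemma nonneg_step v e : nonneg v -> nonneg (avg_step v e).
Proof.
move=> h k; rewrite /avg_step; case: ifP => // _.
by rewrite divr_ge0 ?addr_ge0.
Qed.

Lemma supp_step v e : nonneg v -> supp (avg_step v e) = sstep (supp v) e.
Proof.
move=> h; rewrite /sstep /supp !inE.
rewrite -avg_ne0 //.
apply/setP => k; rewrite !inE /avg_step.
case: ifP => ke.
  case: ifP => H.
    by rewrite !inE; case/orP: ke => ->; rewrite ?orbT.
  move: H; rewrite avg_ne0 // => /norP[/negPn/eqP h1 /negPn/eqP h2].
  by rewrite inE; case/orP: ke => /eqP ->; rewrite ?h1 ?h2 eqxx.
by case: ifP => //= _; rewrite !inE; move: ke; case: (k == e.1); case: (k == e.2).
Qed.

End Supp.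

Section Analytic.
Variables (R : realType) (n : nat) (adj : rel 'I_n) (alpha : R).
Local Notation T := ('I_n * 'I_n)%type.
Local Notation Ed := (edges adj).
Local Notation M := (#|Ed|%:R : R).
Hypothesis M0 : (0 < #|Ed|)%N.

Definition cov (S : {set 'I_n}) : bool := alpha * n%:R <= #|S|%:R.
Definition av (g : {set 'I_n} -> R) S := M^-1 * \sum_(e in Ed) g (sstep S e).

Fixpoint P t S : R := match t with 0 => (cov S)%:R | t'.+1 => if cov S then 0 else av (P t') S end.
Fixpoint Rr t S : R := match t with 0 => 1 | t'.+1 => if cov S then 0 else av (Rr t') S end.

Lemma av_add g h S : av (fun x => g x + h x) S = av g S + av h S.
Proof. by rewrite /av big_split mulrDr. Qed.

Lemma av_scale k g S : av (fun x => k * g x) S = k * av g S.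
Proof. by rewrite /av -mulr_sumr mulrCA. Qed.

Lemma av_sum N g S : av (fun x => \sum_(0 <= t < N) g t x) S = \sum_(0 <= t < N) av (g t) S.
Proof. by rewrite /av exchange_big mulr_sumr. Qed.

Lemma av_cst k S : av (fun _ => k) S = k.
Proof.
rewrite /av sumr_const -[k *+ _]mulr_natr mulrC mulfK //.
by rewrite pnatr_eq0 -lt0n.
Qed.

Lemma av_le g h S : (forall e, e \in Ed -> g (sstep S e) <= h (sstep S e)) -> av g S <= av h S.
Proof.
move=> H; rewrite /av ler_wpM2l ?invr_ge0 ?ler0n //.
by apply: ler_sum => e /H.
Qed.

Lemma av_ge0 g S : (forall e, e \in Ed -> 0 <= g (sstep S e)) -> 0 <= av g S.
Proof. by move=> H; rewrite -(av_cst 0 S); apply: av_le. Qed.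

Lemma P_ge0 t S : 0 <= P t S.
Proof. elim: t S => [|t IH] S /=; first exact: ler0n. by case: ifP => // _; apply: av_ge0. Qed.

Lemma Rr_ge0 t S : 0 <= Rr t S.
Proof. elim: t S => [|t IH] S /=; first exact: ler01. by case: ifP => // _; apply: av_ge0. Qed.

Lemma sumPR N S : \sum_(0 <= t < N) P t S + Rr N S = 1.
Proof.
elim: N S => [|N IH] S; first by rewrite big_geq // add0r.
rewrite big_nat_recl //= ; case: ifP => cv.
  by rewrite big1 ?addr0 // => t _ /=; rewrite cv.
rewrite (_ : false%:R = 0 :> R) // add0r -av_sum -av_add.
transitivity (av (fun _ => 1) S); last exact: av_cst.
by congr av; apply: funext => x; exact: IH.
Qed.

Variables (c B lam : R) (psi : {set 'I_n} -> R).
Definition f k := \sum_(k <= j < n | (j%:R : R) < alpha * n%:R) (j%:R : R)^-1.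
Definition phi (S : {set 'I_n}) := c * f #|S|.
Fixpoint F t S : R := match t with 0 => phi S | t'.+1 => if cov S then 0 else av (F t') S end.

Hypothesis phi0 : forall S, cov S -> phi S <= 0.
Hypothesis drift : forall S, ~~ cov S -> phi S <= 1 + av phi S.
Hypothesis phiB : forall S, phi S <= B.

Lemma main_ind N S :
  phi S <= \sum_(0 <= t < N) t%:R * P t S + N%:R * Rr N S + F N S.
Proof.
elim: N S => [|N IH] S; first by rewrite big_geq // mul0r !add0r.
rewrite big_nat_recl //= mul0r add0r; case: ifP => cv.
  by rewrite big1 ?mulr0 ?addr0 ?phi0 // => t _ /=; rewrite mulr0.
have -> : \sum_(0 <= i < N) i.+1%:R * av (P i) S = \sum_(0 <= i < N) av (fun x => i%:R * P i x + P i x) S.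
  by apply: eq_bigr => t _ /=; rewrite av_add av_scale -natr1 mulrDl mul1r.
rewrite -av_sum -av_scale -!av_add.
apply: (le_trans (drift (negbT cv))).
rewrite addrC -[X in _ + X <= _](av_cst 1 S) -av_add; apply: av_le => e _.
set x := sstep S e.
have := IH x; have := sumPR N x; rewrite big_split /= -natr1; lra.
Qed.

Lemma F_le N S : F N S <= B * Rr N S.
Proof.
elim: N S => [|N IH] S /=; first by rewrite mulr1.
case: ifP => _; first by rewrite mulr0.
by rewrite -av_scale; apply: av_le.
Qed.

Hypothesis psi1 : forall S, 1 <= psi S.
Hypothesis lam0 : 0 <= lam.
Hypothesis step_ne : forall (S : {set 'I_n}) e, (0 < #|S|)%N -> (0 < #|sstep S e|)%N.
Hypothesis tail : forall S : {set 'I_n}, (0 < #|S|)%N -> ~~ cov S -> av psi S <= lam * psi S.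

Lemma Rr_le N (S : {set 'I_n}) : (0 < #|S|)%N -> Rr N S <= lam ^+ N * psi S.
Proof.
elim: N S => [|N IH] S Sne /=; first by rewrite expr0 mul1r.
case: ifP => cv.
  by rewrite mulr_ge0 ?exprn_ge0 // (le_trans ler01).
apply: (@le_trans _ _ (av (fun x => lam ^+ N * psi x) S)).
  by apply: av_le => e _; apply: IH; apply: step_ne.
by rewrite av_scale exprSr -mulrA ler_wpM2l ?exprn_ge0 // tail // cv.
Qed.

Lemma final_bound N K S : (N <= K)%N ->
  phi S - B * Rr N S - N%:R * Rr K S <= \sum_(0 <= t < K) t%:R * P t S.
Proof.
move=> NK.
rewrite (@big_cat_nat _ _ _ N 0 K _ _ (leq0n N) NK) /=.
have h1 : N%:R * \sum_(N <= t < K) P t S <= \sum_(N <= t < K) t%:R * P t S.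
  rewrite mulr_sumr big_nat_cond [X in _ <= X]big_nat_cond.
  apply: ler_sum => t /andP[/andP[Nt _] _].
  by rewrite ler_wpM2r ?P_ge0 // ler_nat.
have h2 : \sum_(N <= t < K) P t S = Rr N S - Rr K S.
  have := sumPR K S; have := sumPR N S.
  rewrite (@big_cat_nat _ _ _ N 0 K _ _ (leq0n N) NK) /=; lra.
have := main_ind N S; have := F_le N S; rewrite h2 in h1; lra.
Qed.

End Analytic.


Lemma card_sum (T : finType) (Q : pred T) : #|[set x | Q x]| = (\sum_x (Q x : nat))%N.
Proof. by rewrite -sum1_card big_mkcond /=; apply: eq_bigr => x _; rewrite inE; case: (Q x). Qed.

Section Graph.
Variables (n : nat) (adj : rel 'I_n).
Hypothesis sym : symmetric adj.
Hypothesis irr : irreflexive adj.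
Local Notation Ed := (edges adj).
Local Notation T := ('I_n * 'I_n)%type.

Lemma deg_sum (Q : pred 'I_n) :
  (\sum_(i | Q i) deg adj i)%N = #|[set p : T | Q p.1 && adj p.1 p.2]|.
Proof.
rewrite card_sum -(pair_bigA _ (fun i j => nat_of_bool (Q i && adj i j))) /=.
rewrite big_mkcond /=; apply: eq_bigr => i _.
case: (Q i) => /=; last by rewrite big1.
by rewrite /deg card_sum.
Qed.

Lemma bnd_le (S : {set 'I_n}) :
  (#|[set e in Ed | (e.1 \in S) != (e.2 \in S)]| <= \sum_(i in S) deg adj i)%N.
Proof.
rewrite deg_sum.
set D := [set e in Ed | _].
pose g (e : T) := if e.1 \in S then e else (e.2, e.1).
rewrite -(@card_in_imset _ _ g D); last first.
  move=> [a b] [c d]; rewrite !inE /g /= => /andP[/andP[ab _] _] /andP[/andP[cd _] _].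
  case: (a \in S); case: (c \in S) => //; case=> h1 h2; subst => //.
  - by move: (ltn_trans ab cd); rewrite ltnn.
  - by move: (ltn_trans ab cd); rewrite ltnn.
apply/subset_leq_card/fintype.subsetP => _ /imsetP[[a b] + ->].
rewrite !inE /g /= => /andP[/andP[ab adjab] bnd].
case aS: (a \in S); rewrite /= ?aS ?adjab //.
by move: bnd; rewrite aS /= sym adjab andbT; case: (b \in S).
Qed.

Lemma sumdeg_le : (\sum_i deg adj i <= 2 * #|Ed|)%N.
Proof.
rewrite deg_sum.
apply: (@leq_trans #|Ed :|: [set (e.2, e.1) | e in Ed]|).
  apply: subset_leq_card; apply/fintype.subsetP => [[a b]]; rewrite !inE /= => ab.
  have : a != b by apply/eqP => h; move: ab; rewrite h irr.
  rewrite neq_ltn => /orP[lt|lt]; first by rewrite lt ab.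
  apply/orP; right; apply/imsetP; exists (b, a) => //.
  by rewrite !inE /= lt sym.
rewrite mul2n -addnn; apply: leq_trans (leq_card_setU _ _) _.
by rewrite leq_add2l leq_imset_card.
Qed.

Hypothesis conn : forall i j : 'I_n, connect adj i j.

Lemma exists_bnd (S : {set 'I_n}) : (0 < #|S|)%N -> (#|S| < n)%N ->
  exists2 e, e \in Ed & (e.1 \in S) != (e.2 \in S).
Proof.
move=> S0 Sn.
case: (pickP [pred e | (e \in Ed) && ((e.1 \in S) != (e.2 \in S))]) => [e /andP[He Hb]|none].
  by exists e.
exfalso.
have cl : fingraph.closed adj (mem S).
  move=> x y axy.
  have : x != y by apply/eqP => h; move: axy; rewrite h irr.
  rewrite neq_ltn => /orP[lt|lt].
    by move: (none (x, y)); rewrite /= !inE /= lt axy /= => /negbFE/eqP.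
  by move: (none (y, x)); rewrite /= !inE /= lt sym axy /= => /negbFE/eqP.
case: (pickP (mem S)) => [i0 Hi0|]; last first.
  by move=> h; move: S0; rewrite (eq_card0 h).
case: (pickP (predC (mem S))) => [j0 Hj0|h]; last first.
  move: Sn; have := cardC (mem S); rewrite card_ord (eq_card0 h) addn0 => ->; by rewrite ltnn.
have := closed_connect cl (conn i0 j0).
have -> : i0 \in mem S by exact: Hi0.
have -> : (j0 \in mem S) = false by apply/negbTE; exact: Hj0.
by [].
Qed.

End Graph.


Section Conc.
Variables (R : realType) (n : nat) (adj : rel 'I_n) (alpha : R).
Local Notation Ed := (edges adj).
Local Notation M := (#|Ed|%:R : R).

Lemma prob_eq t v : nonneg v -> prob_hit_at adj alpha v t = P adj alpha t (supp v).
Proof.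
elim: t v => [|t IH] v hv.
  by rewrite /prob_hit_at card_cnt cnt0 expr0 divr1.
rewrite /prob_hit_at card_cnt cntS /=.
have -> : covered alpha v = cov alpha (supp v) by [].
case: ifP => _; first by rewrite mul0r.
rewrite /av natr_sum exprS invfM mulrCA; congr (_ * _).
rewrite mulr_suml; apply: eq_bigr => e _.
rewrite -supp_step // -IH; last exact: nonneg_step.
by rewrite -card_cnt.
Qed.

Lemma f_rec k : (k < n)%N ->
  f n alpha k = (if (k%:R : R) < alpha * n%:R then (k%:R : R)^-1 else 0) + f n alpha k.+1.
Proof. by move=> kn; rewrite /f big_ltn_cond //; case: ifP => _ //; rewrite add0r. Qed.

Lemma f_cov k : alpha * n%:R <= k%:R -> f n alpha k = 0.
Proof.
move=> H; rewrite /f big_nat_cond big1 // => j /andP[/andP[kj _] jl]; exfalso.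
by move: jl; rewrite ltNge (le_trans H) // ler_nat.
Qed.

Lemma f_step k : f n alpha k.+1 <= f n alpha k.
Proof.
case: (ltnP k n) => kn.
  by rewrite (f_rec kn) lerDr; case: ifP => _ //; rewrite invr_ge0 ler0n.
by rewrite /f !big_geq // (leq_trans kn).
Qed.

Lemma f_mono k l : (k <= l)%N -> f n alpha l <= f n alpha k.
Proof.
move=> kl; rewrite -(subnKC kl); elim: (l - k)%N => [|d IH]; first by rewrite addn0.
by rewrite addnS; apply: le_trans (f_step _) IH.
Qed.

Hypothesis M0 : (0 < #|Ed|)%N.
Hypothesis alpha1 : alpha <= 1.

Lemma ncov_lt (S : {set 'I_n}) : ~~ cov alpha S -> (#|S| < n)%N.
Proof.
rewrite /cov -ltNge => h; rewrite -(ltr_nat R); apply: (lt_le_trans h).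
by rewrite -[X in _ <= X](mul1r (n%:R)) ler_wpM2r // ler0n.
Qed.

Lemma sum_ind (b : pred ('I_n * 'I_n)) :
  \sum_(e in Ed) ((b e)%:R : R) = #|[set e in Ed | b e]|%:R.
Proof.
rewrite -natr_sum; congr (_%:R).
rewrite -sum1_card big_mkcond /= [RHS]big_mkcond /=; apply: eq_bigr => e _.
by rewrite !inE; case: (_ && _); case: (b e).
Qed.

Variable c : R.
Hypothesis c0 : 0 <= c.
Hypothesis hc : forall S : {set 'I_n},
  c * #|[set e in Ed | (e.1 \in S) != (e.2 \in S)]|%:R <= #|S|%:R * M.

Lemma drift (S : {set 'I_n}) : ~~ cov alpha S -> phi alpha c S <= 1 + av adj (phi alpha c) S.
Proof.
move=> ncv; have kn := ncov_lt ncv.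
set k := #|S|.
pose bnd e := (e.1 \in S) != (e.2 \in S).
have hf : f n alpha k = (k%:R)^-1 + f n alpha k.+1.
  by rewrite f_rec //; move: ncv; rewrite /cov -ltNge => ->.
have pe : forall e, e \in Ed -> phi alpha c S - ((bnd e)%:R) * (c / k%:R) <= phi alpha c (sstep S e).
  move=> e _; rewrite /phi; case b: (bnd e).
    rewrite sstep_b // hf mul1r mulrDr /k; lra.
  rewrite sstep_nb; last by rewrite -/(bnd e) b.
  by rewrite (_ : false%:R = 0 :> R) // mul0r subr0.
rewrite /av; apply: (@le_trans _ _ (1 + M^-1 * \sum_(e in Ed) (phi alpha c S - (bnd e)%:R * (c / k%:R)))); last first.
  by rewrite lerD2l ler_wpM2l ?invr_ge0 ?ler0n //; apply: ler_sum.
rewrite sumrB sumr_const -mulr_suml sum_ind -[phi alpha c S *+ _]mulr_natr.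
set X := #|[set e in Ed | _]|%:R.
have Mp : 0 < M by rewrite ltr0n.
have hX : X * (c / k%:R) <= M.
  have := hc S; rewrite -/X -/k.
  case: (posnP k) => [->|kp]; first by rewrite invr0 !mulr0 => _; exact: ltW.
  have kp' : 0 < (k%:R : R) by rewrite ltr0n.
  move=> h; rewrite mulrA ler_pdivrMr // mulrC; lra.
move: hX; set Y := X * (c / k%:R) => hX.
have -> : M^-1 * (phi alpha c S * M - Y) = phi alpha c S - M^-1 * Y.
  by field; rewrite gt_eqF.
have : M^-1 * Y <= 1 by rewrite mulrC ler_pdivrMr // mul1r.
lra.
Qed.

Definition psi (S : {set 'I_n}) : R := 2 ^+ (n - #|S|).
Definition lam : R := 1 - (2 * M)^-1.

Hypothesis sym : symmetric adj.
Hypothesis irr : irreflexive adj.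
Hypothesis conn : forall i j : 'I_n, connect adj i j.

Lemma psi1 (S : {set 'I_n}) : 1 <= psi S.
Proof. by rewrite /psi exprn_ege1 // ler1n. Qed.

Lemma tail (S : {set 'I_n}) : (0 < #|S|)%N -> ~~ cov alpha S -> av adj psi S <= lam * psi S.
Proof.
move=> S0 ncv; have kn := ncov_lt ncv.
have [e0 e0E be0] := exists_bnd sym irr conn S0 kn.
have ps : forall e, e \in Ed -> psi (sstep S e) <= psi S - ((e == e0)%:R) * (psi S / 2).
  move=> e _; have p0 := psi1 S.
  case b: ((e.1 \in S) != (e.2 \in S)).
    have -> : psi (sstep S e) = psi S / 2.
      by rewrite /psi sstep_b // -(subnSK kn) exprS mulrAC divff ?mul1r // pnatr_eq0.
    by case: (e == e0); rewrite /= ?mul1r ?mul0r; lra.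
  have ne : (e == e0) = false by apply/eqP => h; move: b; rewrite h be0.
  by rewrite sstep_nb ?b // ne mul0r subr0.
rewrite /av; apply: (le_trans (ler_wpM2l _ (ler_sum _ ps))); first by rewrite invr_ge0 ler0n.
rewrite sumrB sumr_const -mulr_suml.
rewrite (bigD1 e0) //= eqxx big1 ?addr0 => [|e /andP[_ /negbTE ->]]; last by [].
have Mp : 0 < M by rewrite ltr0n.
rewrite -[psi S *+ _]mulr_natr (_ : true%:R = 1 :> R) // mul1r /lam.
rewrite le_eqVlt; apply/orP; left; apply/eqP; field; rewrite gt_eqF //.
Qed.

End Conc.

Section Harm.
Variable R : realType.

Lemma ln_harm N (x : R) : 0 < x -> x <= N%:R ->
  ln x <= \sum_(1 <= j < N | (j%:R : R) < x) (j%:R : R)^-1.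
Proof.
elim: N x => [|N IH] x x0 xN; first by exfalso; move: xN; rewrite leNgt x0.
case: (lerP x N%:R) => xN'.
  case: (posnP N) => [N0|Np]; first by exfalso; move: xN'; rewrite N0 leNgt x0.
  rewrite big_mkcond /= big_nat_recr //=.
  apply: (le_trans (IH x x0 xN')); rewrite [X in X <= _]big_mkcond /= lerDl.
  by case: ifP => _ //; rewrite invr_ge0 ler0n.
case: (posnP N) => [N0|Np].
  subst N; rewrite big_geq //; apply: ln_le0; exact: xN.
rewrite big_mkcond /= big_nat_recr //= xN'.
have Np' : 0 < (N%:R : R) by rewrite ltr0n.
have h1 := IH N%:R Np' (lexx _).
have e : \sum_(1 <= j < N | (j%:R : R) < N%:R) (j%:R : R)^-1 = \sum_(1 <= j < N | (j%:R : R) < x) (j%:R : R)^-1.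
  rewrite big_nat_cond [RHS]big_nat_cond; apply: eq_bigl => j.
  case jr: (1 <= j < N)%N => //=.
  move: jr => /andP[_ jN]; have jN' : (j%:R : R) < N%:R by rewrite ltr_nat.
  by rewrite jN' (lt_trans jN' xN').
rewrite e big_mkcond /= in h1; apply: le_trans (lerD h1 (lexx _)).
have h2 : ln x <= ln (N.+1%:R) by rewrite ler_ln // posrE ?ltr0n.
apply: (le_trans h2).
have -> : (N.+1%:R : R) = N%:R * (1 + N%:R^-1) by rewrite mulrDr mulr1 mulfV ?gt_eqF // -natr1.
rewrite lnM ?posrE ?ltr0n // ?addr_gt0 ?invr_gt0 //.
rewrite lerD2l; apply: le_ln1Dx.
have : 0 < (N%:R : R)^-1 by rewrite invr_gt0.
lra.
Qed.

End Harm.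


Lemma hc_proof (R : realType) (n : nat) (adj : rel 'I_n) (C : R) :
  symmetric adj -> irreflexive adj -> 0 < C ->
  (forall i j : 'I_n, (deg adj i)%:R <= C * (deg adj j)%:R) ->
  forall S : {set 'I_n},
  n%:R / (2 * C) * #|[set e in edges adj | (e.1 \in S) != (e.2 \in S)]|%:R
    <= #|S|%:R * #|edges adj|%:R.
Proof.
move=> sym irr C0 hdeg S.
set X := #|[set e in edges adj | _]|.
have h1 : (X%:R : R) <= (\sum_(i in S) deg adj i)%:R by rewrite ler_nat (bnd_le sym).
have h2 : forall i, n%:R * (deg adj i)%:R <= C * (2 * #|edges adj|%:R) :> R.
  move=> i.
  have -> : n%:R * (deg adj i)%:R = \sum_(j : 'I_n) ((deg adj i)%:R : R).
    by rewrite sumr_const card_ord mulr_natl.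
  apply: (@le_trans _ _ (\sum_(j : 'I_n) C * (deg adj j)%:R)); first exact: ler_sum.
  rewrite -mulr_sumr; apply: ler_wpM2l; first exact: ltW.
  by rewrite -natr_sum -(natrM R 2) ler_nat; exact: (sumdeg_le sym irr).
have h3 : n%:R * (X%:R : R) <= #|S|%:R * (C * (2 * #|edges adj|%:R)).
  apply: (le_trans (ler_wpM2l (ler0n _ _) h1)).
  rewrite natr_sum mulr_sumr.
  apply: (@le_trans _ _ (\sum_(i in S) C * (2 * #|edges adj|%:R))); first exact: ler_sum.
  by rewrite sumr_const [X in _ <= X]mulr_natl.
have C2 : 0 < 2 * C by rewrite mulr_gt0.
rewrite mulrAC ler_pdivrMr //.
move: h3; set m := (#|edges adj|%:R : R); set k := (#|S|%:R : R); lra.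
Qed.

Unset Implicit Arguments. Set Strict Implicit.

Theorem proposition4 (R : realType) (n : nat) (adj : rel 'I_n) (C : R) :
  (0 < n)%N ->
  symmetric adj -> irreflexive adj ->
  (forall i j : 'I_n, connect adj i j) ->
  0 < C ->
  (forall i j : 'I_n, (deg adj i)%:R <= C * (deg adj j)%:R) ->
  forall eps : R, 0 < eps < 1 ->
  ((n%:R / (2 * C) * ln ((1 - eps) * n%:R))%:E <= @tcov R n adj (1 - eps))%E.
Proof.
move=> n0 sym irr conn C0 hdeg eps /andP[eps0 eps1].
set alpha := 1 - eps.
have a0 : 0 < alpha by rewrite /alpha; lra.
have a1 : alpha <= 1 by rewrite /alpha; lra.
set i0 : 'I_n := Ordinal n0.
set c := n%:R / (2 * C).
have c0 : 0 <= c by rewrite /c divr_ge0 ?ler0n // mulr_ge0 // ltW.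
apply: (le_trans _ (le_bigmax _ (tcov_at adj alpha) i0)).
rewrite /tcov_at /exp_hit.
have nn : forall t, (0 <= t%:R * prob_hit_at adj alpha (@unit_vec R n i0) t)%R.
  by move=> t; rewrite mulr_ge0 ?divr_ge0 ?exprn_ge0 ?ler0n.
case: (lerP (alpha * n%:R) 1) => ha.
  apply: (le_trans (_ : _ <= 0%:E)%E).
    by rewrite lee_fin mulr_ge0_le0 // ln_le0.
  by apply: nneseries_ge0 => t _ _; rewrite lee_fin.
have nR : (0 < n%:R :> R) by rewrite ltr0n.
have n1 : (1 < n)%N.
  rewrite -(ltr_nat R); apply: (lt_le_trans ha).
  by rewrite -[X in _ <= X](mul1r (n%:R)) ler_wpM2r // ler0n.
set S0 : {set 'I_n} := [set i0].
have S01 : #|S0| = 1%N by rewrite cards1.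
have S0p : (0 < #|S0|)%N by rewrite S01.
have S0n : (#|S0| < n)%N by rewrite S01.
have [e eE _] := exists_bnd sym irr conn S0p S0n.
have M0 : (0 < #|edges adj|)%N by apply/card_gt0P; exists e.
have supp0 : supp (@unit_vec R n i0) = S0.
  by apply/setP => x; rewrite !inE /unit_vec; case: (x == i0); rewrite ?oner_eq0 ?eqxx.
have nnv : nonneg (@unit_vec R n i0).
  intro y; rewrite /unit_vec; case: (y == i0) => //; exact: ler01.
set B := c * f n alpha 0.
have B0 : 0 <= B by rewrite /B mulr_ge0 // /f sumr_ge0 // => j _; rewrite invr_ge0 ler0n.
have hphi0 : forall S : {set 'I_n}, cov alpha S -> phi alpha c S <= 0.
  by move=> S cv; rewrite /phi f_cov ?mulr0.
have hdrift := drift M0 a1 (hc_proof sym irr C0 hdeg).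
have hphiB : forall S : {set 'I_n}, phi alpha c S <= B.
  by move=> S; rewrite /phi /B ler_wpM2l // f_mono.
set lm := lam R adj.
have Mp : 0 < (#|edges adj|%:R : R) by rewrite ltr0n.
have M1 : 1 <= (#|edges adj|%:R : R) by rewrite ler1n.
have lm0 : 0 <= lm.
  rewrite /lm /lam subr_ge0 invf_le1 ?mulr_gt0 //; lra.
have lm1 : `|lm| < 1.
  rewrite ger0_norm // /lm /lam ltrBlDr ltrDl invr_gt0 mulr_gt0 //.
have hRr : forall N, Rr adj alpha N S0 <= lm ^+ N * psi R S0.
  move=> N; apply: (Rr_le (@psi1 R n) lm0 (@sstep_ne n) (tail M0 a1 sym irr conn)).
  by rewrite S01.
have hfin := final_bound M0 hphi0 hdrift hphiB.
have psi0 : 0 < psi R S0 by apply: (lt_le_trans ltr01); apply: psi1.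
apply: (@le_trans _ _ ((phi alpha c S0)%:E : \bar R)).
  rewrite lee_fin /phi S01 ler_wpM2l //; apply: ln_harm.
    by rewrite mulr_gt0.
  by rewrite -[X in _ <= X](mul1r (n%:R)) ler_wpM2r // ler0n.
apply/lee_subgt0Pr => d d0.
set e1 := d / (2 * ((B + 1) * psi R S0)).
have e1p : 0 < e1 by rewrite /e1 divr_gt0 // mulr_gt0 // mulr_gt0 //; lra.
have [N _ HN] := cvgr0_norm_le _ (cvg_expr lm1) e1 e1p.
have hN : lm ^+ N <= e1 by apply: le_trans (ler_norm _) (HN N (leqnn N)).
set e2 := d / (2 * ((N%:R + 1) * psi R S0)).
have e2p : 0 < e2 by rewrite /e2 divr_gt0 // mulr_gt0 // mulr_gt0 // ltr_wpDl ?ler0n.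
have [K0 _ HK] := cvgr0_norm_le _ (cvg_expr lm1) e2 e2p.
set K := maxn N K0.
have hK : lm ^+ K <= e2 by apply: le_trans (ler_norm _) (HK K (leq_maxr N K0)).
have fb := hfin N K S0 (leq_maxl N K0).
have hB : B * Rr adj alpha N S0 <= d / 2.
  have -> : d / 2 = (B + 1) * (e1 * psi R S0) by rewrite /e1; field; lra.
  apply: (le_trans (ler_wpM2l B0 (le_trans (hRr N) (ler_wpM2r (ltW psi0) hN)))).
  by apply: ler_wpM2r; [rewrite mulr_ge0 // ltW | lra].
have hNK : N%:R * Rr adj alpha K S0 <= d / 2.
  have -> : d / 2 = (N%:R + 1) * (e2 * psi R S0) by rewrite /e2; field; rewrite ?gt_eqF // ?ltr_wpDl ?ler0n.
  apply: (le_trans (ler_wpM2l (ler0n _ _) (le_trans (hRr K) (ler_wpM2r (ltW psi0) hK)))).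
  by apply: ler_wpM2r; [rewrite mulr_ge0 // ltW | lra].
apply: (le_trans _ (nneseries_lim_ge (P := xpredT) K _)); last by move=> t _ _; rewrite lee_fin.
rewrite sumEFin -EFinB lee_fin.
have -> : \sum_(0 <= i < K) i%:R * prob_hit_at adj alpha (@unit_vec R n i0) i =
          \sum_(0 <= t < K) t%:R * P adj alpha t S0.
  by apply: eq_bigr => t _; rewrite prob_eq // supp0.
lra.
Qed.
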